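(* In the cell FDE setting described in the context, assume (H1), (H2), (H3), and: (H8) there exist $\delta>0$ and $z^*\ge0$ with $q(z)\le-\delta$ for all $z\ge z^*$; (H9) for every $K>0$ there is $L=L(K)$ such that $j(\varphi,\psi)\ge K$ whenever $(\varphi,\psi)\in U_+$ and $\min_{[-h,0]}\varphi\ge L$. Then there exists $K_2$ such that for every $\phi\in X_+$ there is $t_m=t_m(\phi)$ with $w^\phi(t)\le K_2$ for all $t\ge t_m$.
   Context: Let $h>0$, $R_-<0$, $I:=(R_-,\infty)$. $\|\phi\|_0:=\max_{\theta\in[-h,0]}|\phi(\theta)|$, $\|\phi\|_1:=\|\phi\|_0+\|\phi'\|_0$; $x_t(s):=x(t+s)$, $s\in[-h,0]$. Let $U:=C^1([-h,0],\mathbb R)\times C^1([-h,0],I)$, $U_+:=C^1([-h,0],[0,\infty)^2)$, $q:I\to\mathbb R$, $j:U\to\mathbb R$, $\mu\ge0$. Cell FDE: $w'(t)=q(v(t))w(t)$, $v'(t)=j(w_t,v_t)-\mu v(t)$, $t>0$, $(w_0,v_0)=(\varphi,\psi)$. $F(\varphi,\psi):=(q(\psi(0))\varphi(0),j(\varphi,\psi)-\mu\psi(0))$, $X:=\{\phi\in U:\phi'(0)=F(\phi)\}$, $X_+:=X\cap U_+$. Solutions are $C^1$ maps $x=(w,v)$ on $[-h,t_* )$ with $x_0=\phi$, $x_t\in U$, satisfying the equations on $(0,t_* )$. (S): $f$ is $C^1$, each $Df(\phi)$ extends to a linear map on $C([-h,0],\mathbb R^n)$ and $(\phi,\chi)\mapsto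 D_ef(\phi)\chi$ is continuous. (sLb) on $\mathcal O_+$: for each $\|\cdot\|_1$-bounded $B\subset\mathcal O_+$ there is $L_B$ with $|f(\phi)-f(\chi)|\le L_B\|\phi-\chi\|_0$ on $B$. (H1): $j$ satisfies (S) on $U$, (sLb) on $U_+$, $j\ge0$ on $U_+$, and $j(B_1\times B_2)$ is bounded whenever $B_1\times B_2\subset U_+$ with $B_1$ bounded. (H2): $q$ bounded and $C^1$. (H3): $X_+\neq\emptyset$. Under (H1)-(H3) each $\phi\in X_+$ has a unique solution $(w^\phi,v^\phi)$ on $[-h,\infty)$ with segments in $X_+$. *)

(* Defs.v *)
From Stdlib Require Import Reals.
Open Scope R_scope.

(* f has derivative l at x relative to D (one-sided at endpoints of intervals) *)
Definition has_deriv_within (D : R -> Prop) (f : R -> R) (x l : R) : Prop :=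
  forall eps, 0 < eps -> exists del, 0 < del /\
    forall y, D y -> y <> x -> Rabs (y - x) < del ->
      Rabs ((f y - f x) / (y - x) - l) <= eps.

Definition cont_within (D : R -> Prop) (g : R -> R) (x : R) : Prop :=
  forall eps, 0 < eps -> exists del, 0 < del /\
    forall y, D y -> Rabs (y - x) < del -> Rabs (g y - g x) <= eps.

Definition cont_on (D : R -> Prop) (g : R -> R) : Prop :=
  forall x, D x -> cont_within D g x.

Definition deriv_on (D : R -> Prop) (f f' : R -> R) : Prop :=
  forall x, D x -> has_deriv_within D f x (f' x).

Definition C1_on (D : R -> Prop) (f : R -> R) : Prop :=
  exists f', deriv_on D f f' /\ cont_on D f'.

Definition J (h : R) (t : R) : Prop := - h <= t <= 0.

(* ||(f,g)||_0 <= c, using the max-norm on R^2 *)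
Definition bnd0 (h : R) (f g : R -> R) (c : R) : Prop :=
  forall t, J h t -> Rabs (f t) <= c /\ Rabs (g t) <= c.

(* ||(f,g)||_1 <= c  (||.||_1 = ||.||_0 + ||.'||_0) *)
Definition bnd1 (h : R) (f g : R -> R) (c : R) : Prop :=
  exists f' g' a b, deriv_on (J h) f f' /\ deriv_on (J h) g g' /\
    bnd0 h f g a /\ bnd0 h f' g' b /\ a + b <= c.

Definition bnd1s (h : R) (f : R -> R) (c : R) : Prop :=
  bnd1 h f (fun _ => 0) c.

Definition lt1 (h : R) (f g : R -> R) (d : R) : Prop :=
  exists c, c < d /\ bnd1 h f g c.
Definition lt0 (h : R) (f g : R -> R) (d : R) : Prop :=
  exists c, c < d /\ bnd0 h f g c.

Definition fsub (f g : R -> R) : R -> R := fun t => f t - g t.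

Definition InU (h Rm : R) (phi psi : R -> R) : Prop :=
  C1_on (J h) phi /\ C1_on (J h) psi /\ (forall t, J h t -> Rm < psi t).

Definition InUp (h : R) (phi psi : R -> R) : Prop :=
  C1_on (J h) phi /\ C1_on (J h) psi /\
  (forall t, J h t -> 0 <= phi t /\ 0 <= psi t).

Definition InX (h Rm mu : R) (q : R -> R) (j : (R -> R) -> (R -> R) -> R)
  (phi psi : R -> R) : Prop :=
  InU h Rm phi psi /\
  exists phi' psi', deriv_on (J h) phi phi' /\ deriv_on (J h) psi psi' /\
    phi' 0 = q (psi 0) * phi 0 /\ psi' 0 = j phi psi - mu * psi 0.

Definition InXp (h Rm mu : R) (q : R -> R) (j : (R -> R) -> (R -> R) -> R)
  (phi psi : R -> R) : Prop :=
  InX h Rm mu q j phi psi /\ InUp h phi psi.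

(* j is a function on U: it only depends on the restrictions to [-h,0] *)
Definition j_well_defined (h Rm : R) (j : (R -> R) -> (R -> R) -> R) : Prop :=
  forall phi1 psi1 phi2 psi2, InU h Rm phi1 psi1 ->
    (forall t, J h t -> phi1 t = phi2 t /\ psi1 t = psi2 t) ->
    j phi1 psi1 = j phi2 psi2.

Definition cont_J (h : R) (f : R -> R) : Prop := cont_on (J h) f.

Definition prop_S (h Rm : R) (j : (R -> R) -> (R -> R) -> R) : Prop :=
  exists Dj : (R -> R) -> (R -> R) -> (R -> R) -> (R -> R) -> R,
  (forall phi psi, InU h Rm phi psi ->
     forall c1 c2 e1 e2 a, cont_J h c1 -> cont_J h c2 -> cont_J h e1 -> cont_J h e2 ->
       Dj phi psi (fun t => c1 t + a * e1 t) (fun t => c2 t + a * e2 t)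
       = Dj phi psi c1 c2 + a * Dj phi psi e1 e2) /\
  (* Dj(phi) is the Frechet derivative of j at phi (w.r.t. ||.||_1) *)
  (forall phi psi, InU h Rm phi psi ->
     forall eps, 0 < eps -> exists del, 0 < del /\
       forall phi2 psi2, InU h Rm phi2 psi2 ->
         lt1 h (fsub phi2 phi) (fsub psi2 psi) del ->
         forall c, bnd1 h (fsub phi2 phi) (fsub psi2 psi) c ->
           Rabs (j phi2 psi2 - j phi psi - Dj phi psi (fsub phi2 phi) (fsub psi2 psi))
             <= eps * c) /\
  (* j is C^1: phi |-> Dj(phi) continuous in operator norm on C^1 *)
  (forall phi psi, InU h Rm phi psi ->
     forall eps, 0 < eps -> exists del, 0 < del /\
       forall phi2 psi2, InU h Rm phi2 psi2 ->
         lt1 h (fsub phi2 phi) (fsub psi2 psi) del ->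
         forall c1 c2, C1_on (J h) c1 -> C1_on (J h) c2 ->
         forall c, bnd1 h c1 c2 c ->
           Rabs (Dj phi2 psi2 c1 c2 - Dj phi psi c1 c2) <= eps * c) /\
  (* (phi,chi) |-> D_e j(phi) chi continuous on U x C([-h,0],R^2) *)
  (forall phi psi c1 c2, InU h Rm phi psi -> cont_J h c1 -> cont_J h c2 ->
     forall eps, 0 < eps -> exists del, 0 < del /\
       forall phi2 psi2 d1 d2, InU h Rm phi2 psi2 -> cont_J h d1 -> cont_J h d2 ->
         lt1 h (fsub phi2 phi) (fsub psi2 psi) del ->
         lt0 h (fsub d1 c1) (fsub d2 c2) del ->
         Rabs (Dj phi2 psi2 d1 d2 - Dj phi psi c1 c2) <= eps).

Definition prop_sLb (h : R) (j : (R -> R) -> (R -> R) -> R) : Prop :=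
  forall B : (R -> R) -> (R -> R) -> Prop,
    (forall phi psi, B phi psi -> InUp h phi psi) ->
    (exists c, forall phi psi, B phi psi -> bnd1 h phi psi c) ->
    exists LB, forall phi1 psi1 phi2 psi2, B phi1 psi1 -> B phi2 psi2 ->
      forall c, bnd0 h (fsub phi1 phi2) (fsub psi1 psi2) c ->
        Rabs (j phi1 psi1 - j phi2 psi2) <= LB * c.

Definition H1 (h Rm : R) (j : (R -> R) -> (R -> R) -> R) : Prop :=
  prop_S h Rm j /\ prop_sLb h j /\
  (forall phi psi, InUp h phi psi -> 0 <= j phi psi) /\
  (forall B1 B2 : (R -> R) -> Prop,
     (forall phi psi, B1 phi -> B2 psi -> InUp h phi psi) ->
     (exists c, forall phi, B1 phi -> bnd1s h phi c) ->
     exists M, forall phi psi, B1 phi -> B2 psi -> Rabs (j phi psi) <= M).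

Definition I (Rm : R) (z : R) : Prop := Rm < z.

Definition H2 (Rm : R) (q : R -> R) : Prop :=
  (exists M, forall z, I Rm z -> Rabs (q z) <= M) /\ C1_on (I Rm) q.

Definition H3 (h Rm mu : R) (q : R -> R) (j : (R -> R) -> (R -> R) -> R) : Prop :=
  exists phi psi, InXp h Rm mu q j phi psi.

Definition H8 (q : R -> R) : Prop :=
  exists del zs, 0 < del /\ 0 <= zs /\ forall z, zs <= z -> q z <= - del.

Definition H9 (h : R) (j : (R -> R) -> (R -> R) -> R) : Prop :=
  forall K, 0 < K -> exists L, forall phi psi, InUp h phi psi ->
    (forall t, J h t -> L <= phi t) -> K <= j phi psi.

Definition seg (x : R -> R) (t : R) : R -> R := fun s => x (t + s).

Definition Jinf (h : R) (t : R) : Prop := - h <= t.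

Definition is_solution (h Rm mu : R) (q : R -> R) (j : (R -> R) -> (R -> R) -> R)
  (phi psi w v : R -> R) : Prop :=
  C1_on (Jinf h) w /\ C1_on (Jinf h) v /\
  (forall t, J h t -> w t = phi t /\ v t = psi t) /\
  (forall t, Jinf h t -> Rm < v t) /\
  (forall t, 0 < t -> has_deriv_within (Jinf h) w t (q (v t) * w t)) /\
  (forall t, 0 < t -> has_deriv_within (Jinf h) v t (j (seg w t) (seg v t) - mu * v t)).

(* Main.v *)
Require Import Defs.
From Stdlib Require Import Reals Lra Classical FunctionalExtensionality.
Open Scope R_scope.

Lemma hd_dpl D f x l r : 0 < r -> (forall y, Rabs (y - x) < r -> D y) ->
  has_deriv_within D f x l -> derivable_pt_lim f x l.
Proof.
  intros Hr HD Hd eps Heps.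
  destruct (Hd (eps/2)) as [del [Hdel H]]; [lra|].
  assert (Hm : 0 < Rmin del r) by (apply Rmin_pos; lra).
  exists (mkposreal _ Hm). intros hh Hh0 Hhl. simpl in Hhl.
  pose proof (Rmin_l del r). pose proof (Rmin_r del r).
  assert (E : x + hh - x = hh) by ring.
  specialize (H (x + hh)). rewrite E in H.
  assert (Rabs ((f (x + hh) - f x) / hh - l) <= eps/2).
  { apply H; [apply HD; rewrite E; lra | intro C; apply Hh0; lra | lra]. }
  lra.
Qed.

Lemma dpl_cont f x l : derivable_pt_lim f x l -> continuity_pt f x.
Proof.
  intro H. apply derivable_continuous_pt. exists l. exact H.
Qed.

Lemma mvt_open f f' a b : a < b ->
  (forall c, a < c < b -> derivable_pt_lim f c (f' c)) ->
  (forall c, a <= c <= b -> continuity_pt f c) ->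
  exists c, a < c < b /\ f b - f a = f' c * (b - a).
Proof.
  intros Hab Hd Hc.
  assert (pr1 : forall c, a < c < b -> derivable_pt f c).
  { intros c Hc'. exists (f' c). apply Hd; auto. }
  assert (pr2 : forall c, a < c < b -> derivable_pt id c).
  { intros c _. apply derivable_pt_id. }
  destruct (MVT f id a b pr1 pr2 Hab Hc) as [c [P E]].
  { intros; apply derivable_continuous_pt, derivable_pt_id. }
  exists c. split; auto.
  rewrite (derive_pt_eq_0 _ _ _ (pr1 c P) (Hd c P)) in E.
  rewrite (derive_pt_eq_0 _ _ _ (pr2 c P) (derivable_pt_lim_id c)) in E.
  unfold id in E. lra.
Qed.

Lemma mvt_le f f' a b k : a <= b ->
  (forall c, a < c < b -> derivable_pt_lim f c (f' c)) ->
  (forall c, a <= c <= b -> continuity_pt f c) ->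
  (forall c, a < c < b -> f' c <= k) -> f b - f a <= k * (b - a).
Proof.
  intros Hab Hd Hc Hk. destruct (Req_dec a b) as [->|Hne].
  { lra. }
  destruct (mvt_open f f' a b) as [c [Hc1 E]]; auto; [lra|].
  rewrite E. apply Rmult_le_compat_r; [lra|]. apply Hk; auto.
Qed.

Lemma mvt_ge f f' a b k : a <= b ->
  (forall c, a < c < b -> derivable_pt_lim f c (f' c)) ->
  (forall c, a <= c <= b -> continuity_pt f c) ->
  (forall c, a < c < b -> k <= f' c) -> k * (b - a) <= f b - f a.
Proof.
  intros Hab Hd Hc Hk. destruct (Req_dec a b) as [->|Hne].
  { lra. }
  destruct (mvt_open f f' a b) as [c [Hc1 E]]; auto; [lra|].
  rewrite E. apply Rmult_le_compat_r; [lra|]. apply Hk; auto.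
Qed.

Lemma hd_cont_within D f x l : has_deriv_within D f x l -> cont_within D f x.
Proof.
  intros Hd eps Heps.
  destruct (Hd 1) as [del [Hdel H]]; [lra|].
  set (k := Rabs l + 1).
  assert (Hk : 0 < k) by (unfold k; pose proof (Rabs_pos l); lra).
  exists (Rmin del (eps / k)). split.
  { apply Rmin_pos; auto. apply Rdiv_lt_0_compat; auto. }
  intros y Dy Hy. pose proof (Rmin_l del (eps/k)). pose proof (Rmin_r del (eps/k)).
  destruct (Req_dec y x) as [->|Hne].
  { rewrite Rminus_diag, Rabs_R0; lra. }
  specialize (H y Dy Hne ltac:(lra)).
  assert (Hyx : y - x <> 0) by lra.
  assert (E : f y - f x = ((f y - f x)/(y - x) - l) * (y - x) + l * (y - x)) by (field; auto).
  rewrite E.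
  eapply Rle_trans; [apply Rabs_triang|]. rewrite !Rabs_mult.
  assert (Rabs (y - x) * k <= eps).
  { replace eps with ((eps / k) * k) by (field; lra). apply Rmult_le_compat_r; lra. }
  assert (Rabs ((f y - f x) / (y - x) - l) * Rabs (y - x) <= 1 * Rabs (y - x)).
  { apply Rmult_le_compat_r; [apply Rabs_pos| lra]. }
  unfold k in *. pose proof (Rabs_pos l). pose proof (Rabs_pos (y-x)). nra.
Qed.

Lemma last_point f a c z : a < c -> (forall x, a <= x <= c -> continuity_pt f x) ->
  z <= f a -> f c < z ->
  exists p, a <= p < c /\ f p = z /\ forall x, p < x <= c -> f x < z.
Proof.
  intros Hac Hc Ha Hcz.
  set (E := fun x => a <= x <= c /\ z <= f x).
  assert (Hb : bound E) by (exists c; intros x [Hx _]; lra).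
  assert (He : exists x, E x) by (exists a; split; [lra|auto]).
  destruct (completeness E Hb He) as [p [Hub Hlub]].
  assert (Hap : a <= p) by (apply Hub; split; [lra|auto]).
  assert (Hpc : p <= c) by (apply Hlub; intros x [Hx _]; lra).
  assert (Hfp : z <= f p).
  { destruct (Rle_dec z (f p)) as [|Hn]; auto. exfalso.
    destruct (Hc p (conj Hap Hpc) (z - f p)) as [d [Hd Hd2]]; [lra|].
    assert (exists x, E x /\ p - d < x).
    { apply NNPP; intro Hno.
      assert (p <= p - d); [|lra].
      apply Hlub. intros x Ex. destruct (Rle_dec x (p - d)); auto.
      exfalso; apply Hno; exists x; split; auto; lra. }
    destruct H as [x [[Hx1 Hx2] Hx3]].
    assert (Hxp : x <= p) by (apply Hub; split; auto).
    destruct (Req_dec x p) as [->|Hne]; [lra|].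
    assert (Rabs (f x - f p) < z - f p).
    { apply (Hd2 x). split.
      - split; [exact Logic.I| auto].
      - simpl. unfold R_dist. rewrite Rabs_left; lra. }
    unfold Rabs in H; destruct Rcase_abs in H; lra. }
  assert (Hpc' : p < c) by (destruct (Req_dec p c) as [->|]; lra).
  assert (Hafter : forall x, p < x <= c -> f x < z).
  { intros x Hx. destruct (Rlt_dec (f x) z) as [|Hn]; auto. exfalso.
    assert (x <= p) by (apply Hub; split; [lra| lra]). lra. }
  exists p. split; [lra|]. split; auto.
  destruct (Rle_dec (f p) z) as [|Hn]; [lra|]. exfalso.
  destruct (Hc p (conj Hap Hpc) (f p - z)) as [d [Hd Hd2]]; [lra|].
  set (x := Rmin (p + d/2) c).
  assert (p < x <= c) by (unfold x; apply Rmin_case_strong; intros; lra).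
  assert (Rabs (f x - f p) < f p - z).
  { apply (Hd2 x). split.
    - split; [exact Logic.I| intro; lra].
    - simpl. unfold R_dist. rewrite Rabs_right; [|lra].
      unfold x; apply Rmin_case_strong; intros; lra. }
  pose proof (Hafter x H).
  unfold Rabs in H0; destruct Rcase_abs in H0; lra.
Qed.

Lemma first_exit f a c : a < c -> (forall x, a <= x <= c -> continuity_pt f x) ->
  0 <= f a -> f c < 0 ->
  exists s, a <= s < c /\ (forall x, a <= x <= s -> 0 <= f x) /\
    forall eta, 0 < eta -> exists x, s < x /\ x < s + eta /\ x <= c /\ f x < 0.
Proof.
  intros Hac Hc Ha Hcz.
  set (E := fun x => a <= x <= c /\ forall y, a <= y <= x -> 0 <= f y).
  assert (Hb : bound E) by (exists c; intros x [Hx _]; lra).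
  assert (He : exists x, E x).
  { exists a; split; [lra|]. intros y Hy. replace y with a by lra. auto. }
  destruct (completeness E Hb He) as [s [Hub Hlub]].
  assert (Has : a <= s).
  { apply Hub; split; [lra|]. intros y Hy. replace y with a by lra. auto. }
  assert (Hsc : s <= c) by (apply Hlub; intros x [Hx _]; lra).
  assert (Hbefore : forall y, a <= y < s -> 0 <= f y).
  { intros y Hy. destruct (classic (exists x, E x /\ y < x)) as [[x [[_ Hx] Hyx]]|Hno].
    - apply Hx; lra.
    - exfalso. assert (s <= y); [|lra]. apply Hlub. intros x Ex.
      destruct (Rle_dec x y); auto. exfalso; apply Hno; exists x; split; auto; lra. }
  assert (Hfs : 0 <= f s).
  { destruct (Req_dec s a) as [->|Hne]; auto.
    destruct (Rle_dec 0 (f s)) as [|Hn]; auto. exfalso.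
    destruct (Hc s (conj Has Hsc) (- f s)) as [d [Hd Hd2]]; [lra|].
    set (y := Rmax a (s - d/2)).
    assert (a <= y < s) by (unfold y; apply Rmax_case_strong; intros; lra).
    assert (Rabs (f y - f s) < - f s).
    { apply (Hd2 y). split.
      - split; [exact Logic.I| intro; lra].
      - simpl. unfold R_dist. rewrite Rabs_left; [|lra].
        unfold y; apply Rmax_case_strong; intros; lra. }
    pose proof (Hbefore y H).
    unfold Rabs in H0; destruct Rcase_abs in H0; lra. }
  assert (Hall : forall x, a <= x <= s -> 0 <= f x).
  { intros x Hx. destruct (Req_dec x s) as [->|]; auto. apply Hbefore; lra. }
  assert (Hsc' : s < c) by (destruct (Req_dec s c) as [->|]; [lra|lra]).
  exists s. split; [lra|]. split; auto.
  intros eta Heta. apply NNPP; intro Hno.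
  set (x0 := Rmin (s + eta/2) c).
  assert (s < x0 <= c) by (unfold x0; apply Rmin_case_strong; intros; lra).
  assert (x0 <= s); [|lra].
  apply Hub. split; [lra|]. intros y Hy.
  destruct (Rle_dec y s); [apply Hall; lra|].
  destruct (Rle_dec 0 (f y)) as [|Hn]; auto. exfalso. apply Hno.
  exists y. split; [lra|]. split.
  { assert (x0 <= s + eta/2) by (unfold x0; apply Rmin_l). lra. }
  split; lra.
Qed.

Lemma Jinf_nbhd h t : 0 < h -> 0 <= t -> forall y, Rabs (y - t) < h -> Jinf h y.
Proof. intros Hh Ht y Hy. unfold Jinf. unfold Rabs in Hy; destruct Rcase_abs in Hy; lra. Qed.

Lemma hd_Jinf_dpl h f t l : 0 < h -> 0 <= t -> has_deriv_within (Jinf h) f t l ->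
  derivable_pt_lim f t l.
Proof. intros Hh Ht. apply hd_dpl with h; auto. apply Jinf_nbhd; auto. Qed.

Lemma C1_Jinf_cont h f t : 0 < h -> 0 <= t -> C1_on (Jinf h) f -> continuity_pt f t.
Proof.
  intros Hh Ht [f' [Hd _]]. eapply dpl_cont. eapply hd_Jinf_dpl; eauto.
  apply Hd. unfold Jinf; lra.
Qed.

Lemma seg_deriv h f f' s : deriv_on (Jinf h) f f' -> 0 <= s ->
  deriv_on (J h) (seg f s) (seg f' s).
Proof.
  intros Hd Hs th Jth eps Heps. unfold J in Jth.
  destruct (Hd (s + th) ltac:(unfold Jinf; lra) eps Heps) as [del [Hdel H]].
  exists del. split; auto. intros y Jy Hne Hy. unfold seg. unfold J in Jy.
  replace (y - th) with (s + y - (s + th)) by ring.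
  apply H; [unfold Jinf; lra| intro; apply Hne; lra| ].
  replace (s + y - (s + th)) with (y - th) by ring. auto.
Qed.

Lemma seg_cont h f s : cont_on (Jinf h) f -> 0 <= s -> cont_on (J h) (seg f s).
Proof.
  intros Hc Hs th Jth eps Heps. unfold J in Jth.
  destruct (Hc (s + th) ltac:(unfold Jinf; lra) eps Heps) as [del [Hdel H]].
  exists del. split; auto. intros y Jy Hy. unfold seg. unfold J in Jy.
  apply H; [unfold Jinf; lra| ].
  replace (s + y - (s + th)) with (y - th) by ring. auto.
Qed.

Lemma seg_C1 h f s : C1_on (Jinf h) f -> 0 <= s -> C1_on (J h) (seg f s).
Proof.
  intros [f' [Hd Hc]] Hs. exists (seg f' s). split.
  - apply seg_deriv; auto.
  - apply seg_cont; auto.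
Qed.

Lemma deriv_on_plus_const D f f' b : deriv_on D f f' -> deriv_on D (fun x => f x + b) f'.
Proof.
  intros Hd x Dx eps Heps. destruct (Hd x Dx eps Heps) as [del [Hdel H]].
  exists del; split; auto. intros y Dy Hne Hy.
  replace (f y + b - (f x + b)) with (f y - f x) by ring. apply H; auto.
Qed.

Lemma C1_plus_const D f b : C1_on D f -> C1_on D (fun x => f x + b).
Proof.
  intros [f' [Hd Hc]]. exists f'. split; auto. apply deriv_on_plus_const; auto.
Qed.

Lemma deriv_on_sub D f f' g g' : deriv_on D f f' -> deriv_on D g g' ->
  deriv_on D (fsub f g) (fun x => f' x - g' x).
Proof.
  intros Hf Hg x Dx eps Heps.
  destruct (Hf x Dx (eps/2)) as [d1 [Hd1 H1]]; [lra|].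
  destruct (Hg x Dx (eps/2)) as [d2 [Hd2 H2]]; [lra|].
  exists (Rmin d1 d2). split; [apply Rmin_pos; auto|].
  intros y Dy Hne Hy. pose proof (Rmin_l d1 d2); pose proof (Rmin_r d1 d2).
  specialize (H1 y Dy Hne ltac:(lra)). specialize (H2 y Dy Hne ltac:(lra)).
  unfold fsub.
  assert (Hyx : y - x <> 0) by lra.
  replace ((f y - g y - (f x - g x)) / (y - x) - (f' x - g' x)) with
    (((f y - f x) / (y - x) - f' x) - ((g y - g x) / (y - x) - g' x)) by (field; auto).
  eapply Rle_trans; [apply Rabs_triang|]. rewrite Rabs_Ropp. lra.
Qed.

Lemma deriv_on_const D c : deriv_on D (fun _ => c) (fun _ => 0).
Proof.
  intros x Dx eps Heps. exists 1. split; [lra|]. intros y Dy Hne Hy.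
  replace ((c - c) / (y - x) - 0) with 0 by (field; lra). rewrite Rabs_R0; lra.
Qed.

Lemma cont_on_const D c : cont_on D (fun _ => c).
Proof.
  intros x Dx eps Heps. exists 1. split; [lra|]. intros y Dy Hy.
  rewrite Rminus_diag, Rabs_R0; lra.
Qed.

Lemma ext_cont h f : 0 < h -> (forall x, Jinf h x -> cont_within (Jinf h) f x) ->
  forall x, continuity_pt (fun y => f (Rmax y (-h))) x.
Proof.
  intros Hh Hc x eps Heps.
  assert (Jx : Jinf h (Rmax x (-h))) by (unfold Jinf; apply Rmax_r).
  destruct (Hc _ Jx (eps/2)) as [del [Hdel H]]; [lra|].
  exists del. split; [lra|]. intros y [_ Hy]. simpl in *. unfold R_dist in *.
  assert (Rabs (f (Rmax y (-h)) - f (Rmax x (-h))) <= eps/2); [|lra].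
  apply H; [unfold Jinf; apply Rmax_r|].
  eapply Rle_lt_trans; [|exact Hy].
  unfold Rmax; destruct (Rle_dec y (-h)), (Rle_dec x (-h));
   unfold Rabs; repeat destruct Rcase_abs; lra.
Qed.

Lemma dexp k x : derivable_pt_lim (fun y => exp (k * y)) x (k * exp (k * x)).
Proof.
  assert (H := derivable_pt_lim_comp (fun y => k * y) exp x k (exp (k * x))).
  replace (k * exp (k * x)) with (exp (k * x) * k) by ring.
  apply H.
  - pose proof (derivable_pt_lim_scal (fun y => y) k x 1 (derivable_pt_lim_id x)) as H1.
    rewrite Rmult_1_r in H1. exact H1.
  - apply derivable_pt_lim_exp.
Qed.

Lemma dmul_exp f x l k : derivable_pt_lim f x l ->
  derivable_pt_lim (fun y => f y * exp (k * y)) x (l * exp (k * x) + f x * (k * exp (k * x))).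
Proof.
  intro H. apply (derivable_pt_lim_mult f (fun y => exp (k * y))); auto. apply dexp.
Qed.

Lemma cont_mul_exp f x k : continuity_pt f x -> continuity_pt (fun y => f y * exp (k * y)) x.
Proof.
  intro H. apply (continuity_pt_mult f (fun y => exp (k * y))); auto.
  eapply dpl_cont. apply dexp.
Qed.

Lemma w_nonneg h Rm mu q j phi psi w v M : 0 < h ->
  is_solution h Rm mu q j phi psi w v ->
  (forall t, J h t -> 0 <= phi t) ->
  (forall z, I Rm z -> Rabs (q z) <= M) ->
  forall t, Jinf h t -> 0 <= w t.
Proof.
  intros Hh [Cw [Cv [Init [Vpos [Dw Dv]]]]] Hphi HM t Jt.
  destruct (Rle_dec t 0) as [Ht|Ht].
  { destruct (Init t) as [-> _]; [unfold J, Jinf in *; lra|]. apply Hphi. unfold J, Jinf in *; lra. }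
  destruct (Rle_dec 0 (w t)) as [|Hn]; auto. exfalso.
  assert (J0 : J h 0) by (unfold J; lra).
  destruct (last_point w 0 t 0) as [p [Hp [Hwp Hneg]]].
  - lra.
  - intros x Hx. apply C1_Jinf_cont with h; auto; lra.
  - destruct (Init 0 J0) as [-> _]. auto.
  - lra.
  - set (f := fun y => w y * exp ((- M) * y)).
    assert (Hge : 0 * (t - p) <= f t - f p).
    { apply mvt_ge with (f' := fun y => q (v y) * w y * exp (-M * y) + w y * (-M * exp (-M * y))).
      - lra.
      - intros c Hc. apply dmul_exp. apply hd_Jinf_dpl with h; auto; try lra. apply Dw. lra.
      - intros c Hc. apply cont_mul_exp. apply C1_Jinf_cont with h; auto; lra.
      - intros c Hc. pose proof (Hneg c ltac:(lra)).
        assert (Hq : q (v c) <= M).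
        { pose proof (HM (v c) (Vpos c ltac:(unfold Jinf; lra))). unfold Rabs in H0; destruct Rcase_abs in H0; lra. }
        pose proof (exp_pos (-M * c)).
        replace (q (v c) * w c * exp (- M * c) + w c * (- M * exp (- M * c))) with
          ((- w c) * (M - q (v c)) * exp (-M * c)) by ring.
        apply Rmult_le_pos; [|lra]. apply Rmult_le_pos; lra. }
    unfold f in Hge. rewrite Hwp in Hge.
    pose proof (exp_pos (-M * t)). nra.
Qed.

Lemma Dj_scal (h Rm : R) (j : (R -> R) -> (R -> R) -> R)
  (Dj : (R -> R) -> (R -> R) -> (R -> R) -> (R -> R) -> R)
  (Hlin : forall phi psi, InU h Rm phi psi ->
     forall c1 c2 e1 e2 a, cont_J h c1 -> cont_J h c2 -> cont_J h e1 -> cont_J h e2 ->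
       Dj phi psi (fun t => c1 t + a * e1 t) (fun t => c2 t + a * e2 t)
       = Dj phi psi c1 c2 + a * Dj phi psi e1 e2)
  (_Hfr : forall phi psi, InU h Rm phi psi ->
     forall eps, 0 < eps -> exists del, 0 < del /\
       forall phi2 psi2, InU h Rm phi2 psi2 ->
         lt1 h (fsub phi2 phi) (fsub psi2 psi) del ->
         forall c, bnd1 h (fsub phi2 phi) (fsub psi2 psi) c ->
           Rabs (j phi2 psi2 - j phi psi - Dj phi psi (fsub phi2 phi) (fsub psi2 psi))
             <= eps * c) phi psi a : InU h Rm phi psi ->
  Dj phi psi (fun _ => 0) (fun _ => a) = a * Dj phi psi (fun _ => 0) (fun _ => 1).
Proof.
  intro HU.
  assert (cJ : forall c, cont_J h (fun _ => c)) by (intro; apply cont_on_const).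
  pose proof (Hlin phi psi HU (fun _ => 0) (fun _ => 0) (fun _ => 0) (fun _ => 0) 1
     (cJ 0) (cJ 0) (cJ 0) (cJ 0)) as H0.
  assert (E0 : (fun _ : R => 0 + 1 * 0) = (fun _ : R => 0))
    by (apply functional_extensionality; intro; ring).
  cbv beta in H0. rewrite E0 in H0.
  pose proof (Hlin phi psi HU (fun _ => 0) (fun _ => 0) (fun _ => 0) (fun _ => 1) a
     (cJ 0) (cJ 0) (cJ 0) (cJ 1)) as H1.
  assert (E1 : (fun _ : R => 0 + a * 0) = (fun _ : R => 0))
    by (apply functional_extensionality; intro; ring).
  assert (E2 : (fun _ : R => 0 + a * 1) = (fun _ : R => a))
    by (apply functional_extensionality; intro; ring).
  cbv beta in H1. rewrite E1, E2 in H1. rewrite H1. lra.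
Qed.

Lemma bnd1_const (h : R) c : bnd1 h (fun _ => 0) (fun _ => c) (Rabs c).
Proof.
  exists (fun _ => 0), (fun _ => 0), (Rabs c), 0.
  split; [apply deriv_on_const|]. split; [apply deriv_on_const|].
  split; [intros t _; rewrite Rabs_R0; split; [apply Rabs_pos| lra]|].
  split; [intros t _; rewrite Rabs_R0; lra| lra].
Qed.

Lemma gderiv (h Rm : R) (j : (R -> R) -> (R -> R) -> R)
  (Dj : (R -> R) -> (R -> R) -> (R -> R) -> (R -> R) -> R)
  (Hlin : forall phi psi, InU h Rm phi psi ->
     forall c1 c2 e1 e2 a, cont_J h c1 -> cont_J h c2 -> cont_J h e1 -> cont_J h e2 ->
       Dj phi psi (fun t => c1 t + a * e1 t) (fun t => c2 t + a * e2 t)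
       = Dj phi psi c1 c2 + a * Dj phi psi e1 e2)
  (Hfr : forall phi psi, InU h Rm phi psi ->
     forall eps, 0 < eps -> exists del, 0 < del /\
       forall phi2 psi2, InU h Rm phi2 psi2 ->
         lt1 h (fsub phi2 phi) (fsub psi2 psi) del ->
         forall c, bnd1 h (fsub phi2 phi) (fsub psi2 psi) c ->
           Rabs (j phi2 psi2 - j phi psi - Dj phi psi (fsub phi2 phi) (fsub psi2 psi))
             <= eps * c) phi psi lo b : (forall b', lo < b' -> InU h Rm phi (fun t => psi t + b')) ->
  lo < b ->
  derivable_pt_lim (fun b' => j phi (fun t => psi t + b')) b
    (Dj phi (fun t => psi t + b) (fun _ => 0) (fun _ => 1)).
Proof.
  intros HU Hb eps Heps.
  destruct (Hfr phi (fun t => psi t + b) (HU b Hb) (eps/2)) as [del [Hdel H]]; [lra|].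
  assert (Hm : 0 < Rmin del (b - lo)) by (apply Rmin_pos; lra).
  exists (mkposreal _ Hm). intros hh Hh0 Hhl. simpl in Hhl.
  pose proof (Rmin_l del (b - lo)). pose proof (Rmin_r del (b - lo)).
  assert (Hlo : lo < b + hh) by (unfold Rabs in Hhl; destruct Rcase_abs in Hhl; lra).
  specialize (H phi (fun t => psi t + (b + hh)) (HU _ Hlo)).
  assert (E1 : fsub phi phi = fun _ => 0)
    by (apply functional_extensionality; intro; unfold fsub; ring).
  assert (E2 : fsub (fun t => psi t + (b + hh)) (fun t => psi t + b) = fun _ => hh)
    by (apply functional_extensionality; intro; unfold fsub; ring).
  rewrite E1, E2 in H.
  assert (Hlt : lt1 h (fun _ => 0) (fun _ => hh) del).
  { exists (Rabs hh). split; [lra| apply bnd1_const]. }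
  specialize (H Hlt (Rabs hh) (bnd1_const h hh)).
  rewrite (Dj_scal h Rm j Dj Hlin Hfr) in H by (apply HU; auto).
  set (D := Dj phi (fun t => psi t + b) (fun _ => 0) (fun _ => 1)) in *.
  set (g1 := j phi (fun t => psi t + (b + hh))) in *.
  set (g0 := j phi (fun t => psi t + b)) in *.
  replace (g1 - g0 - hh * D) with (((g1 - g0) / hh - D) * hh) in H by (field; auto).
  rewrite Rabs_mult in H.
  assert (0 < Rabs hh) by (apply Rabs_pos_lt; auto).
  assert (Rabs ((g1 - g0) / hh - D) <= eps / 2).
  { apply Rmult_le_reg_r with (Rabs hh); auto. }
  lra.
Qed.

Lemma exp_le x y : x <= y -> exp x <= exp y.
Proof. intro H. destruct (Rle_lt_or_eq_dec _ _ H) as [H' | Heq]; [| rewrite Heq]; [left; apply exp_increasing; auto| lra]. Qed.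

Lemma uc_helper h f a e : 0 < h -> (forall x, Jinf h x -> cont_within (Jinf h) f x) -> 0 < e ->
  exists del, 0 < del /\ forall y z, -h <= y <= a -> -h <= z <= a -> Rabs (y - z) < del ->
    Rabs (f y - f z) < e.
Proof.
  intros Hh Hc He.
  destruct (Heine (fun y => f (Rmax y (-h))) (fun c => -h <= c <= a) (compact_P3 (-h) a)
     (fun x _ => ext_cont h f Hh Hc x) (mkposreal e He)) as [[del Hd] H].
  exists del. split; auto. intros y z Hy Hz Hyz.
  specialize (H y z Hy Hz Hyz). simpl in H.
  rewrite !Rmax_left in H by lra. auto.
Qed.

Lemma C1_cont_within h f : C1_on (Jinf h) f -> forall x, Jinf h x -> cont_within (Jinf h) f x.
Proof. intros [f' [Hd _]] x Jx. eapply hd_cont_within. apply Hd; auto. Qed.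




Lemma v_nonneg h Rm mu q j phi psi w v : 0 < h -> Rm < 0 -> 0 <= mu -> prop_S h Rm j ->
  (forall phi psi, InUp h phi psi -> 0 <= j phi psi) ->
  is_solution h Rm mu q j phi psi w v ->
  (forall t, J h t -> 0 <= psi t) ->
  (forall t, Jinf h t -> 0 <= w t) ->
  forall t, Jinf h t -> 0 <= v t.
Proof.
  intros Hh HRm Hmu [Dj [Hlin [Hfr [_ Hc4]]]] Hj0 [Cw [Cv [Init [Vpos [Dw Dv]]]]] Hpsi Hw t Jt.
  destruct (Rle_dec t 0) as [Ht|Ht].
  { destruct (Init t) as [_ ->]; [unfold J, Jinf in *; lra|]. apply Hpsi. unfold J, Jinf in *; lra. }
  destruct (Rle_dec 0 (v t)) as [|Hn]; auto. exfalso.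
  assert (J0 : J h 0) by (unfold J; lra).
  destruct (first_exit v 0 t) as [s [Hs [Hvs Heta]]].
  - lra.
  - intros x Hx. apply C1_Jinf_cont with h; auto; lra.
  - destruct (Init 0 J0) as [_ ->]. auto.
  - lra.
  - assert (Hvb : forall x, -h <= x <= s -> 0 <= v x).
    { intros x Hx. destruct (Rle_dec x 0).
      - destruct (Init x) as [_ ->]; [unfold J; lra|]. apply Hpsi; unfold J; lra.
      - apply Hvs; lra. }
    pose proof Cw as [w' [Dw' Cw']]. pose proof Cv as [v' [Dv' Cv']].
    assert (cJ : forall c, cont_J h (fun _ => c)) by (intro; apply cont_on_const).
    assert (HUs : InU h Rm (seg w s) (seg v s)).
    { split; [apply seg_C1; auto; lra|]. split; [apply seg_C1; auto; lra|].
      intros th Jth. apply Vpos. unfold J, Jinf in *; lra. }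
    destruct (Hc4 _ _ (fun _ => 0) (fun _ => 1) HUs (cJ 0) (cJ 1) 1 ltac:(lra)) as [del0 [Hdel0 H4]].
    set (d := Rmin del0 (- Rm)).
    assert (Hd : 0 < d) by (apply Rmin_pos; lra).
    assert (Hd1 : d <= del0) by apply Rmin_l.
    assert (Hd2 : d <= - Rm) by apply Rmin_r.
    destruct (uc_helper h w (s+1) (d/8) Hh (C1_cont_within h w Cw) ltac:(lra)) as [e1 [He1 U1]].
    destruct (uc_helper h w' (s+1) (d/8) Hh (fun x Jx => Cw' x Jx) ltac:(lra)) as [e2 [He2 U2]].
    destruct (uc_helper h v (s+1) (d/8) Hh (C1_cont_within h v Cv) ltac:(lra)) as [e3 [He3 U3]].
    destruct (uc_helper h v' (s+1) (d/8) Hh (fun x Jx => Cv' x Jx) ltac:(lra)) as [e4 [He4 U4]].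
    set (D0 := Dj (seg w s) (seg v s) (fun _ => 0) (fun _ => 1)).
    set (C := Rabs D0 + 1).
    assert (HC : 1 <= C) by (unfold C; pose proof (Rabs_pos D0); lra).
    set (eta := Rmin (Rmin (Rmin e1 e2) (Rmin e3 e4)) (Rmin 1 (1 / (2 * C)))).
    assert (Heta0 : 0 < eta).
    { unfold eta. repeat apply Rmin_pos; auto; try lra. apply Rdiv_lt_0_compat; lra. }
    assert (Hee : eta <= e1 /\ eta <= e2 /\ eta <= e3 /\ eta <= e4 /\ eta <= 1 /\ eta <= 1 / (2 * C)).
    { unfold eta.
      pose proof (Rmin_l (Rmin (Rmin e1 e2) (Rmin e3 e4)) (Rmin 1 (1/(2*C)))).
      pose proof (Rmin_r (Rmin (Rmin e1 e2) (Rmin e3 e4)) (Rmin 1 (1/(2*C)))).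
      pose proof (Rmin_l (Rmin e1 e2) (Rmin e3 e4)). pose proof (Rmin_r (Rmin e1 e2) (Rmin e3 e4)).
      pose proof (Rmin_l e1 e2). pose proof (Rmin_r e1 e2).
      pose proof (Rmin_l e3 e4). pose proof (Rmin_r e3 e4).
      pose proof (Rmin_l 1 (1/(2*C))). pose proof (Rmin_r 1 (1/(2*C))).
      repeat split; lra. }
    destruct Hee as [Hee1 [Hee2 [Hee3 [Hee4 [Hee5 Hee6]]]]].
    destruct (Heta eta Heta0) as [x [Hx1 [Hx2 [Hx3 Hx4]]]].
    destruct (continuity_ab_min v s x) as [tau [Hmin Htau]].
    { lra. }
    { intros c Hc. apply C1_Jinf_cont with h; auto; lra. }
    assert (Hvtau : v tau < 0) by (pose proof (Hmin x ltac:(lra)); lra).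
    assert (Hst : s < tau).
    { destruct (Req_dec tau s) as [E|E]; [|lra]. rewrite E in Hvtau. pose proof (Hvs s ltac:(lra)). lra. }
    set (a := - v tau).
    assert (Ha0 : 0 < a) by (unfold a; lra).
    assert (Had : a < d / 8).
    { pose proof (U3 tau s ltac:(lra) ltac:(lra) ltac:(rewrite Rabs_right; lra)).
      pose proof (Hvs s ltac:(lra)). unfold a.
      unfold Rabs in H; destruct Rcase_abs in H; lra. }
    assert (Hwin : forall r th, s <= r <= tau -> J h th -> - a <= v (r + th)).
    { intros r th Hr Jth. unfold J in Jth. destruct (Rle_dec (r + th) s).
      - pose proof (Hvb (r + th) ltac:(lra)). unfold a; lra.
      - unfold a. rewrite Ropp_involutive. apply Hmin. lra. }
    assert (Key : forall r, s < r < tau -> - C * a <= j (seg w r) (seg v r)).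
    { intros r Hr.
      set (G := fun b => j (seg w r) (fun th => seg v r th + b)).
      assert (HUb : forall b, Rm + a < b -> InU h Rm (seg w r) (fun th => seg v r th + b)).
      { intros b Hb. split; [apply seg_C1; auto; lra|]. split.
        - apply C1_plus_const. apply seg_C1; auto; lra.
        - intros th Jth. unfold seg. pose proof (Hwin r th ltac:(lra) Jth). lra. }
      assert (Hder : forall b, 0 <= b <= a -> derivable_pt_lim G b
                 (Dj (seg w r) (fun th => seg v r th + b) (fun _ => 0) (fun _ => 1))).
      { intros b Hb. unfold G. apply (gderiv h Rm j Dj Hlin Hfr) with (lo := Rm + a); auto. lra. }
      destruct (MVT_cor2 G (fun b => Dj (seg w r) (fun th => seg v r th + b) (fun _ => 0) (fun _ => 1)) 0 a Ha0 Hder)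
        as [c [Ec Hc]].
      assert (Hbound : Dj (seg w r) (fun th => seg v r th + c) (fun _ => 0) (fun _ => 1) <= C).
      { assert (Hlt1 : lt1 h (fsub (seg w r) (seg w s)) (fsub (fun th => seg v r th + c) (seg v s)) del0).
        { exists (d/8 + c + d/8). split; [lra|].
          exists (fun th => seg w' r th - seg w' s th), (fun th => seg v' r th - seg v' s th), (d/8 + c), (d/8).
          split; [apply deriv_on_sub; apply seg_deriv; auto; lra|].
          split; [apply deriv_on_sub; [apply deriv_on_plus_const|]; apply seg_deriv; auto; lra|].
          split; [|split; [|lra]].
          - intros th Jth. unfold J in Jth. unfold fsub, seg. split.
            + pose proof (U1 (r + th) (s + th) ltac:(lra) ltac:(lra)
                 ltac:(replace (r + th - (s + th)) with (r - s) by ring; rewrite Rabs_right; lra)). lra.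
            + pose proof (U3 (r + th) (s + th) ltac:(lra) ltac:(lra)
                 ltac:(replace (r + th - (s + th)) with (r - s) by ring; rewrite Rabs_right; lra)).
              replace (v (r + th) + c - v (s + th)) with ((v (r + th) - v (s + th)) + c) by ring.
              eapply Rle_trans; [apply Rabs_triang|]. rewrite (Rabs_right c); lra.
          - intros th Jth. unfold J in Jth. unfold seg. split.
            + pose proof (U2 (r + th) (s + th) ltac:(lra) ltac:(lra)
                 ltac:(replace (r + th - (s + th)) with (r - s) by ring; rewrite Rabs_right; lra)). lra.
            + pose proof (U4 (r + th) (s + th) ltac:(lra) ltac:(lra)
                 ltac:(replace (r + th - (s + th)) with (r - s) by ring; rewrite Rabs_right; lra)). lra. }
        assert (Hlt0 : lt0 h (fsub (fun _ : R => 0) (fun _ : R => 0)) (fsub (fun _ : R => 1) (fun _ : R => 1)) del0).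
        { exists 0. split; auto. intros th _. unfold fsub. rewrite !Rminus_diag, Rabs_R0. lra. }
        pose proof (H4 (seg w r) (fun th => seg v r th + c) (fun _ => 0) (fun _ => 1)
                      (HUb c ltac:(lra)) (cJ 0) (cJ 1) Hlt1 Hlt0).
        fold D0 in H. unfold C. unfold Rabs in H at 1; destruct Rcase_abs in H;
        pose proof (Rle_abs D0); lra. }
      assert (HGa : 0 <= G a).
      { apply Hj0. split; [apply seg_C1; auto; lra|]. split.
        - apply C1_plus_const. apply seg_C1; auto; lra.
        - intros th Jth. unfold seg. split.
          + apply Hw. unfold J, Jinf in *; lra.
          + pose proof (Hwin r th ltac:(lra) Jth). lra. }
      assert (HG0 : G 0 = j (seg w r) (seg v r)).
      { unfold G. f_equal. apply functional_extensionality; intro; ring. }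
      rewrite <- HG0.
      assert (Dj (seg w r) (fun th => seg v r th + c) (fun _ => 0) (fun _ => 1) * (a - 0) <= C * a).
      { replace (a - 0) with a by ring. apply Rmult_le_compat_r; lra. }
      lra. }
    assert (Hu : (- C * a * exp (mu * tau)) * (tau - s) <=
                 v tau * exp (mu * tau) - v s * exp (mu * s)).
    { apply mvt_ge with (f := fun y => v y * exp (mu * y))
        (f' := fun y => (j (seg w y) (seg v y) - mu * v y) * exp (mu * y) + v y * (mu * exp (mu * y))).
      - lra.
      - intros c Hc. apply dmul_exp. apply hd_Jinf_dpl with h; auto; try lra. apply Dv. lra.
      - intros c Hc. apply cont_mul_exp. apply C1_Jinf_cont with h; auto; lra.
      - intros c Hc.
        replace ((j (seg w c) (seg v c) - mu * v c) * exp (mu * c) + v c * (mu * exp (mu * c)))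
          with (j (seg w c) (seg v c) * exp (mu * c)) by ring.
        pose proof (Key c Hc).
        pose proof (exp_le (mu * c) (mu * tau) ltac:(nra)).
        pose proof (exp_pos (mu * c)).
        assert (0 < C * a) by nra.
        nra. }
    pose proof (Hvs s ltac:(lra)).
    pose proof (exp_pos (mu * s)). pose proof (exp_pos (mu * tau)).
    assert (v tau * exp (mu * tau) = - a * exp (mu * tau)) by (unfold a; ring).
    assert (Hcs : 1 <= C * (tau - s)).
    { assert (0 < a * exp (mu * tau)) by nra.
      apply Rmult_le_reg_r with (a * exp (mu * tau)); auto.
      assert (0 <= v s * exp (mu * s)) by nra. nra. }
    assert (C * (tau - s) < C * (1 / (2 * C))).
    { apply Rmult_lt_compat_l; lra. }
    replace (C * (1 / (2 * C))) with (1/2) in H3 by (field; lra).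
    lra.
Qed.

Lemma barrier f f' a b z : a <= b -> (forall x, a <= x <= b -> continuity_pt f x) ->
  (forall c, a < c < b -> derivable_pt_lim f c (f' c)) ->
  (forall c, a < c < b -> f c <= z -> 0 <= f' c) -> z <= f a -> z <= f b.
Proof.
  intros Hab Hc Hd Hp Ha. destruct (Rle_dec z (f b)) as [|Hn]; auto. exfalso.
  destruct (Req_dec a b) as [E|E]; [subst; lra|].
  destruct (last_point f a b z) as [p [Hp1 [Hp2 Hp3]]]; auto; try lra.
  assert (0 * (b - p) <= f b - f p).
  { apply mvt_ge with f'; try lra.
    - intros c Hc'. apply Hd; lra.
    - intros c Hc'. apply Hc; lra.
    - intros c Hc'. apply Hp; [lra|]. pose proof (Hp3 c ltac:(lra)). lra. }
  lra.
Qed.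

Lemma rise f f' a b z : a <= b -> (forall x, a <= x <= b -> continuity_pt f x) ->
  (forall c, a < c < b -> derivable_pt_lim f c (f' c)) ->
  (forall c, a < c < b -> f c <= z -> 1 <= f' c) -> z - f a <= b - a -> z <= f b.
Proof.
  intros Hab Hc Hd Hp Ha.
  destruct (classic (exists x, a <= x <= b /\ z <= f x)) as [[x [Hx Hzx]]|Hno].
  - apply barrier with f' x; auto; try lra.
    + intros; apply Hc; lra.
    + intros; apply Hd; lra.
    + intros c Hc' Hfc. pose proof (Hp c ltac:(lra) Hfc). lra.
  - assert (1 * (b - a) <= f b - f a).
    { apply mvt_ge with f'; auto. intros c Hc'. apply Hp; auto.
      destruct (Rle_dec (f c) z); auto. exfalso. apply Hno. exists c. split; lra. }
    lra.
Qed.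

Theorem lemma16 (h Rm mu : R) (q : R -> R) (j : (R -> R) -> (R -> R) -> R) :
  0 < h -> Rm < 0 -> 0 <= mu ->
  j_well_defined h Rm j ->
  H1 h Rm j -> H2 Rm q -> H3 h Rm mu q j -> H8 q -> H9 h j ->
  exists K2, forall phi psi, InXp h Rm mu q j phi psi ->
    forall w v, is_solution h Rm mu q j phi psi w v ->
      exists tm, forall t, tm <= t -> w t <= K2.
Proof.
  intros Hh HRm Hmu Hwd [HS [_ [Hj0 _]]] [[M HM] _] _ [del [zs [Hdel [Hzs Hq]]]] H9.
  assert (HM0 : 0 <= M) by (pose proof (HM 0 ltac:(unfold I; lra)); pose proof (Rabs_pos (q 0)); lra).
  destruct (H9 (mu * zs + 1) ltac:(nra)) as [L0 HL].
  set (L := Rmax L0 1).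
  assert (HL1 : 1 <= L) by apply Rmax_r.
  assert (HL0 : L0 <= L) by apply Rmax_l.
  set (K2 := L * exp (M * (h + zs))).
  assert (HK2 : L <= K2).
  { unfold K2. pose proof (exp_le 0 (M * (h + zs)) ltac:(nra)). rewrite exp_0 in H. nra. }
  exists K2. intros phi psi [_ [Cphi [Cpsi Hpp]]] w v Hsol.
  assert (Hw : forall t, Jinf h t -> 0 <= w t).
  { apply (w_nonneg h Rm mu q j phi psi w v M); auto. intros t Jt; apply Hpp; auto. }
  assert (Hv : forall t, Jinf h t -> 0 <= v t).
  { apply (v_nonneg h Rm mu q j phi psi w v); auto. intros t Jt; apply Hpp; auto. }
  pose proof Hsol as [Cw [Cv [Init [Vpos [Dw Dv]]]]].
  assert (Hqv : forall t, Jinf h t -> q (v t) <= M).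
  { intros t Jt. pose proof (HM (v t) (Vpos t Jt)). unfold Rabs in H; destruct Rcase_abs in H; lra. }
  assert (Dw2 : forall c, 0 < c -> derivable_pt_lim w c (q (v c) * w c)).
  { intros c Hc. apply hd_Jinf_dpl with h; auto; try lra. }
  assert (Dv2 : forall c, 0 < c -> derivable_pt_lim v c (j (seg w c) (seg v c) - mu * v c)).
  { intros c Hc. apply hd_Jinf_dpl with h; auto; try lra. }
  assert (Cw2 : forall c, 0 <= c -> continuity_pt w c) by (intros; apply C1_Jinf_cont with h; auto).
  assert (Cv2 : forall c, 0 <= c -> continuity_pt v c) by (intros; apply C1_Jinf_cont with h; auto).
  assert (Phase : forall p T, 0 <= p -> (forall x, p <= x <= T -> L <= w x) ->
            forall y, p + h + zs <= y <= T -> zs <= v y).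
  { intros p T Hp HwL y Hy.
    assert (Vd : forall c, p + h < c < T -> v c <= zs -> 1 <= j (seg w c) (seg v c) - mu * v c).
    { intros c Hc Hvc.
      assert (mu * zs + 1 <= j (seg w c) (seg v c)).
      { apply HL.
        - split; [apply seg_C1; auto; lra|]. split; [apply seg_C1; auto; lra|].
          intros th Jth. unfold seg, J in *. split; [apply Hw| apply Hv]; unfold Jinf; lra.
        - intros th Jth. unfold seg, J in *. pose proof (HwL (c + th) ltac:(lra)). lra. }
      nra. }
    assert (zs <= v (p + h + zs)).
    { apply rise with (fun c => j (seg w c) (seg v c) - mu * v c) (p + h); try lra.
      - intros; apply Cv2; lra.
      - intros; apply Dv2; lra.
      - intros c Hc Hvc. apply Vd; auto. lra.
      - pose proof (Hv (p + h) ltac:(unfold Jinf; lra)). lra. }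
    apply barrier with (fun c => j (seg w c) (seg v c) - mu * v c) (p + h + zs); try lra.
    - intros; apply Cv2; lra.
    - intros; apply Dv2; lra.
    - intros c Hc Hvc. pose proof (Vd c ltac:(lra) Hvc). lra. }
  assert (Decay : forall p T, 0 <= p -> (forall x, p <= x <= T -> L <= w x) ->
            forall y, p + h + zs <= y <= T -> w y - w (p + h + zs) <= (- del * L) * (y - (p + h + zs))).
  { intros p T Hp HwL y Hy.
    apply mvt_le with (fun c => q (v c) * w c); try lra.
    - intros; apply Dw2; lra.
    - intros; apply Cw2; lra.
    - intros c Hc. pose proof (Hq (v c) (Phase p T Hp HwL c ltac:(lra))).
      pose proof (HwL c ltac:(lra)). nra. }
  assert (HA : exists t0, 0 <= t0 /\ w t0 <= L).
  { apply NNPP; intro Hno.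
    assert (Hgt : forall t, 0 <= t -> L < w t).
    { intros t Ht. destruct (Rlt_dec L (w t)) as [|Hn]; auto. exfalso; apply Hno; exists t; split; lra. }
    set (T0 := h + zs).
    set (T := T0 + w T0 / (del * L) + 1).
    assert (HwT0 : 0 <= w T0) by (apply Hw; unfold Jinf, T0; lra).
    assert (0 < del * L) by nra.
    assert (0 <= w T0 / (del * L)) by (unfold Rdiv; apply Rmult_le_pos; [lra| left; apply Rinv_0_lt_compat; lra]).
    assert (Hd := Decay 0 T ltac:(lra) ltac:(intros x Hx; pose proof (Hgt x ltac:(lra)); lra) T).
    replace (0 + h + zs) with T0 in Hd by (unfold T0; ring).
    specialize (Hd ltac:(unfold T; lra)).
    assert (- del * L * (T - T0) = - (w T0) - del * L).
    { unfold T. field. lra. }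
    assert (HT0 : 0 <= T0) by (unfold T0; lra).
    pose proof (Hgt T ltac:(unfold T; lra)). lra. }
  destruct HA as [t0 [Ht0 Hwt0]].
  exists t0. intros t Ht.
  destruct (Rle_dec (w t) K2) as [|Hn]; auto. exfalso.
  destruct (last_point (fun x => - w x) t0 t (- L)) as [p [Hp1 [Hp2 Hp3]]].
  { destruct (Req_dec t0 t) as [E|E]; [subst; lra| lra]. }
  { intros x Hx. exact (continuity_pt_opp w x (Cw2 x ltac:(lra))). }
  { lra. }
  { lra. }
  simpl in Hp2, Hp3.
  assert (HwL : forall x, p <= x <= t -> L <= w x).
  { intros x Hx. destruct (Req_dec x p) as [E|E]; [subst; lra|].
    pose proof (Hp3 x ltac:(lra)). lra. }
  assert (Grow : forall y, p <= y <= t -> w y <= L * exp (M * (y - p))).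
  { intros y Hy.
    assert (H : w y * exp (- M * y) - w p * exp (- M * p) <= 0 * (y - p)).
    { apply (mvt_le (fun x => w x * exp (- M * x)) (fun x => q (v x) * w x * exp (- M * x) + w x * (- M * exp (- M * x))) p y 0).
      - lra.
      - intros c Hc. apply dmul_exp. apply Dw2; lra.
      - intros c Hc. apply cont_mul_exp. apply Cw2; lra.
      - intros c Hc.
        replace (q (v c) * w c * exp (- M * c) + w c * (- M * exp (- M * c)))
          with (w c * (q (v c) - M) * exp (- M * c)) by ring.
        pose proof (Hw c ltac:(unfold Jinf; lra)). pose proof (Hqv c ltac:(unfold Jinf; lra)).
        pose proof (exp_pos (- M * c)).
        assert (w c * (q (v c) - M) <= 0) by nra. nra. }
    assert (Hp2' : w p = L) by lra. rewrite Hp2' in H.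
    assert (w y * exp (- M * y) * exp (M * y) <= L * exp (- M * p) * exp (M * y)).
    { apply Rmult_le_compat_r; [left; apply exp_pos| lra]. }
    rewrite Rmult_assoc, <- exp_plus, Rmult_assoc, <- exp_plus in H0.
    replace (- M * y + M * y) with 0 in H0 by ring. rewrite exp_0, Rmult_1_r in H0.
    replace (- M * p + M * y) with (M * (y - p)) in H0 by ring. auto. }
  assert (Hexp : forall y, p <= y <= p + h + zs -> L * exp (M * (y - p)) <= K2).
  { intros y Hy. unfold K2. apply Rmult_le_compat_l; [lra|]. apply exp_le. nra. }
  destruct (Rle_dec t (p + h + zs)) as [Hle|Hgt].
  - pose proof (Grow t ltac:(lra)). pose proof (Hexp t ltac:(lra)). lra.
  - pose proof (Grow (p + h + zs) ltac:(lra)). pose proof (Hexp (p + h + zs) ltac:(lra)).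
    pose proof (Decay p t ltac:(lra) HwL t ltac:(lra)).
    assert (0 <= del * L * (t - (p + h + zs))) by (apply Rmult_le_pos; nra).
    lra.
Qed.
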